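(* Consider a wireless localization network with $n$ anchors and $N_a$ agents. For each agent $k\in\{1,\dots,N_a\}$ let $\phi_{k1},\dots,\phi_{kn}\in\mathbb{R}$, $\xi_{k1},\dots,\xi_{kn}\ge 0$ and a localization requirement $\varrho_k>0$ be given; let $\mathbf{R}_k=\operatorname{diag}\{\xi_{k1},\dots,\xi_{kn}\}$, $\mathbf{c}_k=[\cos2\phi_{k1},\dots,\cos2\phi_{kn}]^{\mathsf T}$, $\mathbf{s}_k=[\sin2\phi_{k1},\dots,\sin2\phi_{kn}]^{\mathsf T}$. For $\mathbf{x}\in\mathbb{R}^n$, $\mathbf{x}\succeq\mathbf{0}$, define $\mathcal{P}(\mathbf{p}_k;\mathbf{x})=\operatorname{tr}\{(\sum_{j=1}^n x_j\xi_{kj}\mathbf{u}(\phi_{kj})\mathbf{u}(\phi_{kj})^{\mathsf T})^{-1}\}$ (equal to $+\infty$ if the matrix is singular). Let $c_1,\dots,c_L$ be affine functions on $\mathbb{R}^n$. Then the problem $$\min_{\mathbf{x}\succeq\mathbf{0}}\ \mathbf{1}^{\mathsf T}\mathbf{x}\quad\text{s.t.}\quad \mathcal{P}(\mathbf{p}_k;\mathbf{x})\le\varrho_k\ \ \forall k,\qquad c_l(\mathbf{x})\le 0\ \ (l=1,\dots,L)$$ is equivalent to the second-order cone program $$\min_{\mathbf{x}\succeq\mathbf{0}}\ \mathbf{1}^{\mathsf T}\mathbf{x}\quad\text{s.t.}\quad \big\|\mathbf{A}_k\mathbf{R}_k\mathbf{x}+\mathbf{b}_k\big\|\le \mathbf{1}^{\mathsf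 T}\mathbf{R}_k\mathbf{x}-2\varrho_k^{-1}\ \ \forall k,\qquad c_l(\mathbf{x})\le 0\ \ (l=1,\dots,L),$$ where $\mathbf{A}_k=[\mathbf{c}_k\ \ \mathbf{s}_k\ \ \mathbf{0}]^{\mathsf T}\in\mathbb{R}^{3\times n}$ and $\mathbf{b}_k=[0\ \ 0\ \ 2\varrho_k^{-1}]^{\mathsf T}$.
   Context: $\mathbf{u}(\phi)=[\cos\phi\ \ \sin\phi]^{\mathsf T}$; $\mathbf{1}$ is the all-ones vector, $\mathbf{0}$ the zero vector; $\|\cdot\|$ is the Euclidean norm; $\mathbf{x}\succeq\mathbf{0}$ means entrywise nonnegative. $\mathbf{x}$ is the vector of anchor transmit powers and $\mathcal{P}(\mathbf{p}_k;\mathbf{x})$ is the squared position error bound of agent $k$. ''Equivalent'' means the two problems have the same feasible set (and objective). *)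

(* Defs.v *)
From HB Require Import structures.
From mathcomp Require Import all_boot all_order all_algebra.
From mathcomp Require Import all_classical all_reals all_analysis.
Set Implicit Arguments. Unset Strict Implicit. Unset Printing Implicit Defensive.
Import Order.TTheory GRing.Theory Num.Theory.
Local Open Scope ring_scope.

Section Defs.
Variable R : realType.

Definition uvec (phi : R) : 'cV[R]_2 :=
  \col_(i < 2) (if (i == 0 :> nat) then cos phi else sin phi).

Definition nonneg_vec (n : nat) (x : 'cV[R]_n) : Prop := forall i, 0 <= x i 0.

Definition eucl_norm (m : nat) (v : 'cV[R]_m) : R :=
  Num.sqrt (\sum_(i < m) (v i 0) ^+ 2).

Definition affine_fun (n : nat) (f : 'cV[R]_n -> R) : Prop :=
  exists (a : 'rV[R]_n) (d : R), forall x, f x = (a *m x) 0 0 + d.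

Definition EFIM (n : nat) (phi xi : 'I_n -> R) (x : 'cV[R]_n) : 'M[R]_2 :=
  \sum_(j < n) (x j 0 * xi j) *: (uvec (phi j) *m (uvec (phi j))^T).

Definition SPEB (n : nat) (phi xi : 'I_n -> R) (x : 'cV[R]_n) : \bar R :=
  let J := EFIM phi xi x in
  if J \in unitmx then (\tr (invmx J))%:E else +oo%E.

Definition Rmat (n : nat) (xi : 'I_n -> R) : 'M[R]_n := diag_mx (\row_j xi j).

Definition Amat (n : nat) (phi : 'I_n -> R) : 'M[R]_(3, n) :=
  \matrix_(i < 3, j < n)
    (if (i == 0 :> nat) then cos (2 * phi j)
     else if (i == 1 :> nat) then sin (2 * phi j) else 0).

Definition bvec (rho : R) : 'cV[R]_3 :=
  \col_(i < 3) (if (i == 2 :> nat) then 2 * rho^-1 else 0).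

Definition soc_constr (n : nat) (phi xi : 'I_n -> R) (rho : R) (x : 'cV[R]_n) : Prop :=
  eucl_norm (Amat phi *m Rmat xi *m x + bvec rho)
    <= ((const_mx 1 : 'rV[R]_n) *m Rmat xi *m x) 0 0 - 2 * rho^-1.

Definition feasible_orig (n Na L : nat) (phi xi : 'I_Na -> 'I_n -> R)
  (rho : 'I_Na -> R) (c : 'I_L -> 'cV[R]_n -> R) (x : 'cV[R]_n) : Prop :=
  nonneg_vec x /\
  (forall k, (SPEB (phi k) (xi k) x <= (rho k)%:E)%E) /\
  (forall l, c l x <= 0).

Definition feasible_socp (n Na L : nat) (phi xi : 'I_Na -> 'I_n -> R)
  (rho : 'I_Na -> R) (c : 'I_L -> 'cV[R]_n -> R) (x : 'cV[R]_n) : Prop :=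
  nonneg_vec x /\
  (forall k, soc_constr (phi k) (xi k) (rho k) x) /\
  (forall l, c l x <= 0).

Definition objective (n : nat) (x : 'cV[R]_n) : R :=
  ((const_mx 1 : 'rV[R]_n) *m x) 0 0.

End Defs.

(* Main.v *)
Require Import Defs.
From HB Require Import structures.
From mathcomp Require Import all_boot all_order all_algebra.
From mathcomp Require Import all_classical all_reals all_analysis.
From mathcomp Require Import ring lra.
Import Order.TTheory GRing.Theory Num.Theory.
Local Open Scope ring_scope.

Section Aux.
Variable R : realType.

Lemma sqrt_le_iff (u y : R) : 0 <= u ->
  (Num.sqrt u <= y) <-> (0 <= y /\ u <= y ^+ 2).
Proof.
move=> hu; split.
- move=> h; have hy : 0 <= y by exact: le_trans (sqrtr_ge0 _) h.
  split=> //; rewrite -(sqr_sqrtr hu).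
  by rewrite ler_pXn2r // ?nnegrE ?sqrtr_ge0.
- case=> hy hle; rewrite -(ler_pXn2r (n:=2)) // ?nnegrE ?sqrtr_ge0 //.
  by rewrite sqr_sqrtr.
Qed.

Lemma key (a b d r : R) : 0 < r -> 0 <= a -> 0 <= d -> b ^+ 2 <= a * d ->
  ((a * d - b ^+ 2 != 0) /\ (a + d) / (a * d - b ^+ 2) <= r) <->
  (0 <= a + d - 2 / r /\
   (a - d) ^+ 2 + (2 * b) ^+ 2 + (2 / r) ^+ 2 <= (a + d - 2 / r) ^+ 2).
Proof.
move=> hr ha hd hb.
set q := r^-1.
have hq : 0 < q by rewrite invr_gt0.
have hrq : r * q = 1 by rewrite mulfV // gt_eqF.
rewrite -/q.
set D := a * d - b ^+ 2.
have hD : 0 <= D by rewrite subr_ge0.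
have e1 : (a - d) ^+ 2 + (2 * b) ^+ 2 + (2 * q) ^+ 2 <= (a + d - 2 * q) ^+ 2
   <-> (a + d) * q <= D.
  rewrite /D; split => h; nra.
rewrite e1; split.
- case=> hD0 h.
  have Dp : 0 < D by rewrite lt_neqAle eq_sym hD0 hD.
  have h2 : a + d <= r * D by rewrite -ler_pdivrMr.
  have h3 : (a + d) * q <= D.
    have := ler_wpM2r (ltW hq) h2; rewrite -mulrA (mulrC D) mulrA hrq mul1r.
    by [].
  split=> //.
  have hS : 0 < a + d.
    rewrite lt_neqAle addr_ge0 // andbT; apply/eqP => hS.
    have ha0 : a = 0 by lra.
    have hd0 : d = 0 by lra.
    move: Dp; rewrite /D ha0 hd0 mul0r; nra.
  have h4 : 4 * a * d <= (a + d) ^+ 2.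
    have e : (a + d) ^+ 2 = 4 * a * d + (a - d) ^+ 2 by ring.
    by rewrite e lerDl sqr_ge0.
  have h5 : (a + d) * (4 * q) <= (a + d) * (a + d).
    rewrite /D in h3; nra.
  have h6 : 4 * q <= a + d by rewrite -(ler_pM2l hS).
  lra.
- case=> hS h.
  have Dp : 0 < D.
    have : 0 < (a + d) * q by apply: mulr_gt0 => //; nra.
    lra.
  split; first by rewrite gt_eqF.
  rewrite ler_pdivrMr //.
  have e : r * ((a + d) * q) = a + d by rewrite mulrCA hrq mulr1.
  by have := ler_wpM2l (ltW hr) h; rewrite e mulrC.
Qed.


Lemma ord2_cases (i : 'I_2) : i = 0 \/ i = 1.
Proof. by case: i => [[|[|m]] Hi]; [left|right|]; try apply/val_inj. Qed.

Lemma mulmx22 (A B : 'M[R]_2) i j : (A *m B) i j = A i 0 * B 0 j + A i 1 * B 1 j.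
Proof.
rewrite mxE big_ord_recl big_ord1.
by have -> : lift ord0 ord0 = 1 :> 'I_2 by apply/val_inj.
Qed.

Lemma inv22 (J : 'M[R]_2) : J 0 1 = J 1 0 ->
  let D := J 0 0 * J 1 1 - J 0 1 ^+ 2 in
  (J \in unitmx <-> D != 0) /\
  (J \in unitmx -> \tr (invmx J) = (J 0 0 + J 1 1) / D).
Proof.
move=> hs D.
set a := J 0 0; set b := J 0 1; set d := J 1 1.
set M : 'M[R]_2 := \matrix_(i, j) ((if i == 0 then (if j == 0 then d else - b)
                                   else (if j == 0 then - b else a)) / D).
have hM : D != 0 -> J *m M = 1%:M.
  move=> hD; apply/matrixP => i j; rewrite mulmx22 !mxE.
  have e10 : (1 == 0 :> 'I_2) = false by [].
  case: (ord2_cases i) => ->; case: (ord2_cases j) => -> /=;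
    rewrite ?eqxx ?e10 -/a -/b -/d -?hs -/b /=; rewrite /D -/a -/b -/d; field; by [].
have hunit : J \in unitmx -> D != 0.
  move=> hu; have := mulmxV hu => /matrixP h.
  have h00 := h 0 0; have h10 := h 1 0; have h01 := h 0 1; have h11 := h 1 1.
  move: h00 h10 h01 h11; rewrite !mulmx22 !mxE /= -hs -/a -/b -/d.
  set n00 := invmx J 0 0; set n01 := invmx J 0 1; set n10 := invmx J 1 0;
  set n11 := invmx J 1 1 => h00 h10 h01 h11.
  apply/eqP => hD0.
  have ed : d = D * n00.
    rewrite /D -/a -/b -/d.
    have : d * (a * n00 + b * n10) - b * (b * n00 + d * n10) = d * 1 - b * 0.
      by rewrite h00 h10.
    move=> e; rewrite mulr1 mulr0 subr0 in e; rewrite -{1}e; ring.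
  have ea : a = D * n11.
    rewrite /D -/a -/b -/d.
    have : a * (b * n01 + d * n11) - b * (a * n01 + b * n11) = a * 1 - b * 0.
      by rewrite h01 h11.
    move=> e; rewrite mulr1 mulr0 subr0 in e; rewrite -{1}e; ring.
  have eb : b = - (D * n10).
    rewrite /D -/a -/b -/d.
    have : b * (a * n00 + b * n10) - a * (b * n00 + d * n10) = b * 1 - a * 0.
      by rewrite h00 h10.
    move=> e; rewrite mulr1 mulr0 subr0 in e; rewrite -{1}e; ring.
  move: h00; rewrite ea eb hD0 !mul0r oppr0 !mul0r addr0 => /eqP.
  by rewrite eq_sym oner_eq0.
have hinv : D != 0 -> invmx J = M.
  move=> hD; have hJ := hM hD.
  have [hu _] := mulmx1_unit hJ.
  by rewrite -[invmx J]mulmx1 -hJ mulmxA mulVmx // mul1mx.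
split.
  split; first exact: hunit.
  by move=> hD; case: (mulmx1_unit (hM hD)).
move=> hu; rewrite hinv ?hunit //.
rewrite /mxtrace big_ord_recl big_ord1.
have -> : lift ord0 ord0 = 1 :> 'I_2 by apply/val_inj.
rewrite !mxE /=.
have e10 : (1 == 0 :> 'I_2) = false by [].
by rewrite -mulrDl addrC.
Qed.


Lemma cs (a b d : R) :
  (forall v1 v2, 0 <= a * v1 ^+ 2 + b * (2 * v1 * v2) + d * v2 ^+ 2) ->
  0 <= a /\ 0 <= d /\ b ^+ 2 <= a * d.
Proof.
move=> Q.
have ha : 0 <= a.
  have := Q 1 0; have e : a * 1 ^+ 2 + b * (2 * 1 * 0) + d * 0 ^+ 2 = a by ring.
  by rewrite e.
have hd : 0 <= d.
  have := Q 0 1; have e : a * 0 ^+ 2 + b * (2 * 0 * 1) + d * 1 ^+ 2 = d by ring.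
  by rewrite e.
split=> //; split=> //.
have q1 := Q b (- a); have q2 := Q d (- b); have q3 := Q 1 (- b).
have e1 : a * b ^+ 2 + b * (2 * b * - a) + d * (- a) ^+ 2 = a * (a * d - b ^+ 2) by ring.
have e2 : a * d ^+ 2 + b * (2 * d * - b) + d * (- b) ^+ 2 = d * (a * d - b ^+ 2) by ring.
rewrite e1 in q1; rewrite e2 in q2.
have q4 : 0 <= (a + d) * (a * d - b ^+ 2) by rewrite mulrDl; apply: addr_ge0.
case: (ltrP 0 (a + d)) => hS.
  by rewrite -subr_ge0; rewrite pmulr_rge0 in q4.
have ha0 : a = 0 by lra.
have hd0 : d = 0 by lra.
have e3 : a * 1 ^+ 2 + b * (2 * 1 * - b) + d * (- b) ^+ 2 = - (2 * b ^+ 2) + (a + d * b ^+ 2) by ring.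
move: q3; rewrite e3 ha0 hd0 mul0r !addr0 => q3.
rewrite mul0r; have : 0 <= b ^+ 2 := sqr_ge0 b.
lra.
Qed.

Section Agent.
Variables (n : nat) (phi xi : 'I_n -> R) (x : 'cV[R]_n).
Let w k := x k 0 * xi k.
Let J := EFIM phi xi x.

Lemma uvec0 (p : R) : uvec p 0 0 = cos p. Proof. by rewrite mxE. Qed.
Lemma uvec1 (p : R) : uvec p 1 0 = sin p. Proof. by rewrite mxE. Qed.

Lemma EFIME i j : J i j = \sum_k w k * (uvec (phi k) i 0 * uvec (phi k) j 0).
Proof.
rewrite /J /EFIM summxE; apply: eq_bigr => k _.
by rewrite !mxE big_ord1 !mxE.
Qed.

Lemma Jsym : J 0 1 = J 1 0.
Proof. rewrite !EFIME; apply: eq_bigr => k _; by rewrite [X in _ * X]mulrC. Qed.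


Lemma Jquad' (hx : nonneg_vec x) (hxi : forall j, 0 <= xi j) v1 v2 :
  0 <= J 0 0 * v1 ^+ 2 + J 0 1 * (2 * v1 * v2) + J 1 1 * v2 ^+ 2.
Proof.
have -> : J 0 0 * v1 ^+ 2 + J 0 1 * (2 * v1 * v2) + J 1 1 * v2 ^+ 2 =
  \sum_k w k * (cos (phi k) * v1 + sin (phi k) * v2) ^+ 2.
  rewrite !EFIME !mulr_suml -!big_split /=; apply: eq_bigr => k _.
  rewrite ?uvec0 ?uvec1; ring.
apply: sumr_ge0 => k _; apply: mulr_ge0; last exact: sqr_ge0.
exact: mulr_ge0.
Qed.

Lemma yE i : (Amat phi *m Rmat xi *m x) i 0 = \sum_k w k * Amat phi i k.
Proof.
rewrite mxE /Rmat mul_mx_diag; apply: eq_bigr => k _; rewrite !mxE /w; ring.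
Qed.

Lemma y0 : (Amat phi *m Rmat xi *m x) 0 0 = J 0 0 - J 1 1.
Proof.
rewrite yE !EFIME -sumrB; apply: eq_bigr => k _.
rewrite !mxE /= ?uvec0 ?uvec1.
have -> : 2 * phi k = phi k + phi k by ring.
rewrite cosD; ring.
Qed.

Lemma y1 : (Amat phi *m Rmat xi *m x) 1 0 = 2 * J 0 1.
Proof.
rewrite yE !EFIME mulr_sumr; apply: eq_bigr => k _.
rewrite !mxE /= ?uvec0 ?uvec1.
have -> : 2 * phi k = phi k + phi k by ring.
rewrite sinD; ring.
Qed.

Lemma y2 : (Amat phi *m Rmat xi *m x) 2 0 = 0.
Proof.
rewrite yE big1 // => k _; rewrite !mxE /=; ring.
Qed.

Lemma sE : ((const_mx 1 : 'rV[R]_n) *m Rmat xi *m x) 0 0 = J 0 0 + J 1 1.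
Proof.
rewrite mxE /Rmat mul_mx_diag !EFIME -big_split; apply: eq_bigr => k _.
rewrite !mxE ?uvec0 ?uvec1 /w /= -mulrDr -!expr2 cos2Dsin2; ring.
Qed.


Lemma agent (hx : nonneg_vec x) (hxi : forall j, 0 <= xi j) (rho : R) (hr : 0 < rho) :
  (SPEB phi xi x <= rho%:E)%E <-> soc_constr phi xi rho x.
Proof.
have Q := Jquad' hx hxi.
have [hu htr] := @inv22 J Jsym.
rewrite -/J in hu htr.
set a := J 0 0 in Q hu htr *; set b := J 0 1 in Q hu htr *;
set d := J 1 1 in Q hu htr *.
have [ha [hd hb]] := cs _ _ _ Q.
have hn : eucl_norm (Amat phi *m Rmat xi *m x + bvec rho) =
   Num.sqrt ((a - d) ^+ 2 + (2 * b) ^+ 2 + (2 / rho) ^+ 2).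
  rewrite /eucl_norm !big_ord_recl big_ord0 addr0.
  have -> : lift ord0 ord0 = 1 :> 'I_3 by apply/val_inj.
  have -> : lift ord0 (lift ord0 ord0) = 2 :> 'I_3 by apply/val_inj.
  have addE (i : 'I_3) : (Amat phi *m Rmat xi *m x + bvec rho) i 0 =
     (Amat phi *m Rmat xi *m x) i 0 + bvec rho i 0 by rewrite mxE.
  rewrite (addE 0) (addE 1) (addE 2) y0 y1 y2 !mxE /= -/J -/a -/b -/d.
  by rewrite !addr0 !add0r addrA.
rewrite /soc_constr hn sE -/J -/a -/d sqrt_le_iff; last first.
  by rewrite !addr_ge0 ?sqr_ge0.
rewrite -key //.
rewrite /SPEB -/J.
case: (boolP (J \in unitmx)) => hJ.
  rewrite lee_fin htr //; split; last by case.
  by move=> h; split => //; apply/hu.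
split => // -[hD _]; by move/hu: hD; rewrite (negbTE hJ).
Qed.

End Agent.

End Aux.

Theorem proposition3 (R : realType) (n Na L : nat)
  (phi xi : 'I_Na -> 'I_n -> R) (rho : 'I_Na -> R)
  (c : 'I_L -> 'cV[R]_n -> R)
  (hxi : forall k j, 0 <= xi k j)
  (hrho : forall k, 0 < rho k)
  (hc : forall l, affine_fun (c l)) :
  forall x : 'cV[R]_n,
    feasible_orig phi xi rho c x <-> feasible_socp phi xi rho c x.
Proof.
move=> x; rewrite /feasible_orig /feasible_socp.
split.
- case=> hx [hk hl]; split=> //; split=> // k.
  by apply/(@agent R n (phi k) (xi k) x hx (hxi k) (rho k) (hrho k)).
- case=> hx [hk hl]; split=> //; split=> // k.
  by apply/(@agent R n (phi k) (xi k) x hx (hxi k) (rho k) (hrho k)).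
Qed.
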